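(* Let $d > 1$ be an integer and let $K = \operatorname{Frac}(\mathcal{O})$ be the field of fractions of a complete discrete valuation ring $\mathcal{O}$ whose residue field is finite. In the coefficient-choosing game of degree $d$ over $K$, whichever player makes the last move has a winning strategy.
   Context: The coefficient-choosing game of degree $d$ over a commutative ring $R$ with unity: Nora and Wanda alternately choose coefficients of $f(x) = a_d x^d + \cdots + a_0$; on each move the current player picks a not-yet-chosen coefficient and assigns it a value in $R$, subject to $a_d \neq 0$, $a_0 \neq 0$. After all $d+1$ coefficients are chosen, Wanda wins if $f$ has a root in $\operatorname{Frac}(R)$ (here $R = K$ is a field, so a root in $K$), and Nora wins otherwise. Who moves first is fixed in advance, which determines who makes the last move. *)

(* Defs.v *)
From HB Require Import structures.
From mathcomp Require Import all_boot all_order all_algebra.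
Set Implicit Arguments. Unset Strict Implicit. Unset Printing Implicit Defensive.
Import Order.TTheory GRing.Theory Num.Theory.
Local Open Scope ring_scope.

Definition dvdR (R : idomainType) (a x : R) : Prop := exists c : R, x = a * c.

(* pi is a uniformizer of the DVR R: every nonzero element is uniquely-
   (uniqueness automatic in a domain) a unit times a power of pi, pi nonzero
   non-unit. *)
Definition is_uniformizer (R : idomainType) (pi : R) : Prop :=
  [/\ pi != 0, pi \isn't a GRing.unit &
      forall x : R, x != 0 -> exists (u : R) (n : nat), u \is a GRing.unit /\ x = u * pi ^+ n].

Definition madic_complete (R : idomainType) (pi : R) : Prop :=
  forall a : nat -> R,
    (forall n : nat, exists N : nat, forall i j : nat, (N <= i)%N -> (N <= j)%N ->
        dvdR (pi ^+ n) (a i - a j)) ->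
    exists L : R, forall n : nat, exists N : nat, forall i : nat, (N <= i)%N ->
        dvdR (pi ^+ n) (a i - L).

Definition finite_residue (R : idomainType) (pi : R) : Prop :=
  exists s : seq R, forall x : R, exists2 y : R, y \in s & dvdR pi (x - y).

Definition complete_dvr_finite_residue (R : idomainType) : Prop :=
  exists pi : R, [/\ is_uniformizer pi, madic_complete pi & finite_residue pi].

Definition is_fraction_field (R : idomainType) (K : fieldType) (iota : R -> K) : Prop :=
  injective iota /\ forall k : K, exists a b : R, b != 0 /\ k = iota a / iota b.

Inductive player := Nora | Wanda.

Definition other (P : player) : player := match P with Nora => Wanda | Wanda => Nora end.

Definition player_eqb (P Q : player) : bool :=
  match P, Q with Nora, Nora | Wanda, Wanda => true | _, _ => false end.

(* A position: a partial assignment of the coefficients a_0, ..., a_d. *)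
Definition position (K : Type) (d : nat) := 'I_d.+1 -> option K.

Definition nchosen (K : Type) (d : nat) (p : position K d) : nat :=
  #|[pred i : 'I_d.+1 | isSome (p i)]|.

Definition mover_at (first : player) (k : nat) : player :=
  if odd k then other first else first.

(* the player making the last ((d+1)-th) move *)
Definition last_mover (d : nat) (first : player) : player := mover_at first d.

Definition legal (K : fieldType) (d : nat) (i : 'I_d.+1) (a : K) : Prop :=
  ((i : nat) = 0%N \/ (i : nat) = d) -> a != 0.

Definition assign (K : Type) (d : nat) (p : position K d) (i : 'I_d.+1) (a : K)
  : position K d := fun j => if j == i then Some a else p j.

Definition poly_of (K : fieldType) (d : nat) (p : position K d) : {poly K} :=
  \sum_(i < d.+1) (odflt 0 (p i)) *: 'X^i.

Definition wins_final (K : fieldType) (d : nat) (P : player) (p : position K d) : Prop :=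
  match P with
  | Wanda => exists x : K, root (poly_of p) x
  | Nora => ~ (exists x : K, root (poly_of p) x)
  end.

Fixpoint can_force (K : fieldType) (d : nat) (first : player) (P : player)
    (n : nat) (p : position K d) : Prop :=
  match n with
  | 0 => wins_final P p
  | n'.+1 =>
      if player_eqb (mover_at first (nchosen p)) P then
        exists (i : 'I_d.+1) (a : K),
          [/\ p i = None, legal i a & can_force first P n' (assign p i a)]
      else
        forall (i : 'I_d.+1) (a : K),
          p i = None -> legal i a -> can_force first P n' (assign p i a)
  end.

Definition has_winning_strategy (K : fieldType) (d : nat) (first P : player) : Prop :=
  can_force first P d.+1 (fun _ : 'I_d.+1 => None : option K).

(* Main.v *)
Require Import Defs.
From HB Require Import structures.
From mathcomp Require Import all_boot all_order all_algebra.
From mathcomp Require Import zify ring lra.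
From Stdlib Require Import Classical.
Set Implicit Arguments. Unset Strict Implicit. Unset Printing Implicit Defensive.
Import Order.TTheory GRing.Theory Num.Theory.
Local Open Scope ring_scope.


Lemma seg_int (B J D a b j ea eb ej m M : int) : 0 < B -> 0 < J -> D = B + J ->
  B * a + J * b = D * j -> B * ea + J * eb < D * ej ->
  M <= ea + a * m -> M <= eb + b * m -> M < ej + j * m.
Proof.
move=> B0 J0 hD e2 h ha hb.
have p1 : 0 <= B * (ea + a * m - M) by apply: mulr_ge0; lia.
have p2 : 0 <= J * (eb + b * m - M) by apply: mulr_ge0; lia.
rewrite ltNge; apply/negP => hc.
have p3 : 0 <= D * (M - (ej + j * m)) by apply: mulr_ge0; lia.
have e2m : B * a * m + J * b * m = D * j * m by rewrite -e2; ring.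
move: p1 p2 p3; rewrite !mulrDr !mulrN !mulrDr !mulrA hD => p1 p2 p3.
move: e2m h; rewrite hD => e2m h.
lia.
Qed.

Lemma seg (a b j : nat) (ea eb ej m M : int) : (a < j < b)%N ->
  (b - j)%N%:Z * ea + (j - a)%N%:Z * eb < (b - a)%N%:Z * ej ->
  M <= ea + a%:Z * m -> M <= eb + b%:Z * m -> M < ej + j%:Z * m.
Proof.
move=> /andP[aj jb]; apply: seg_int; first by lia. by lia. by lia.
rewrite -!subzn ?(ltnW aj) ?(ltnW jb) ?(ltnW (ltn_trans aj jb)) //; ring.
Qed.

Lemma anchor (d i : nat) (e : nat -> int) (pres : nat -> bool) (m : int) :
  (1 < d)%N -> (i <= d)%N -> pres 0%N -> pres d -> pres i ->
  ((0 < i)%N -> e 0%N - e i != i%:Z * m) ->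
  ((i < d)%N -> e i - e d != (d - i)%N%:Z * m) ->
  ((i == 0%N) || (i == d) -> e 0%N - e d != d%:Z * m) ->
  ((0 < i < d)%N -> d%:Z * e i < (d - i)%N%:Z * e 0%N + i%:Z * e d) ->
  (forall j, (0 < j < i)%N -> pres j ->
     (i - j)%N%:Z * e 0%N + (j - 0)%N%:Z * e i < (i - 0)%N%:Z * e j) ->
  (forall j, (i < j < d)%N -> pres j ->
     (d - j)%N%:Z * e i + (j - i)%N%:Z * e d < (d - i)%N%:Z * e j) ->
  exists j0, [/\ (j0 <= d)%N, pres j0 & forall j, (j <= d)%N -> j != j0 -> pres j ->
     e j0 + j0%:Z * m < e j + j%:Z * m].
Proof.
move=> d1 id p0 pd pi H0 Hd H0d Hmid Hl Hr.
pose T k := e k + k%:Z * m.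
have f0i : (0 < i)%N -> T 0%N != T i.
  move=> i0; apply: contra (H0 i0) => /eqP h; apply/eqP; rewrite /T in h; lia.
have fid : (i < d)%N -> T i != T d.
  move=> i0; apply: contra (Hd i0) => /eqP h; apply/eqP; rewrite /T in h.
  rewrite -subzn ?(ltnW i0) // mulrBl; lia.
have f0d : (i == 0%N) || (i == d) -> T 0%N != T d.
  move=> i0; apply: contra (H0d i0) => /eqP h; apply/eqP; rewrite /T in h; lia.
have fmid : (0 < i < d)%N -> T 0%N = T d -> T i < T 0%N.
  move=> /[dup] hi /Hmid; rewrite -subzn ?(ltnW (proj2 (andP hi))) // mulrBl => hm h.
  have h1 : e 0%N - e d = d%:Z * m by rewrite /T in h; lia.
  have h2 : i%:Z * e 0%N - i%:Z * e d = i%:Z * (d%:Z * m) by rewrite -mulrBr h1.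
  have h3 : d%:Z * T i < d%:Z * T 0%N by rewrite /T !mulrDr; lia.
  by rewrite ltr_pM2l in h3 => //; lia.
pose j0 := if (T i <= T 0%N) && (T i <= T d) then i else if T 0%N <= T d then 0%N else d.
have hj0 : [/\ (j0 <= d)%N, pres j0, T j0 <= T 0%N, T j0 <= T i & T j0 <= T d].
  rewrite /j0; case: ifP => [/andP[u v]|u]; first by split; rewrite ?lexx.
  case: ifP => v; split => //; try exact: lexx;
  move: f0i fid f0d fmid u v; move: (T 0%N) (T i) (T d) => a b c; lia.
case: hj0 => j0d pj0 l0 li ld.
exists j0; split => // j jd jj0 pj.
have anchor_strict : forall a, (a == 0%N) || (a == i) || (a == d) -> a != j0 -> T j0 < T a.
  have ej0 : (j0 == 0%N) || (j0 == i) || (j0 == d).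
    by rewrite /j0; case: ifP; rewrite ?eqxx ?orbT //; case: ifP; rewrite ?eqxx ?orbT.
  move=> a ha aj0; rewrite lt_neqAle.
  have hj : j0 = 0%N \/ j0 = i \/ j0 = d.
    by move: ej0 => /orP[/orP[]|] /eqP ->; auto.
  have ha' : a = 0%N \/ a = i \/ a = d by
    move: ha => /orP[/orP[]|] /eqP ->; auto.
  move: aj0 l0 li ld; move: f0i fid f0d fmid.
  case: hj => [->|[->|->]]; case: ha' => [->|[->|->]];
  move: (T 0%N) (T i) (T d) => x y z; rewrite ?eqxx //; lia.
case: (boolP ((j == 0%N) || (j == i) || (j == d))) => ha; first exact: anchor_strict.
move: ha; rewrite !negb_or => /andP[/andP[j0' ji] jdd].
have jd' : (j < d)%N by rewrite ltn_neqAle jdd.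
have j0'' : (0 < j)%N by rewrite lt0n.
case: (ltngtP j i) => [ji'|ij|/eqP]; last by rewrite (negbTE ji).
  apply: (@seg 0%N i j (e 0%N) (e i)); first by rewrite j0''.
  - by apply: Hl => //; rewrite j0'' ji'.
  - by rewrite /T in l0.
  - exact: li.
apply: (@seg i d j (e i) (e d)); first by rewrite ij.
- by apply: Hr => //; rewrite ij jd'.
- exact: li.
- exact: ld.
Qed.


Lemma nmul (p : nat) (z r : int) : 0 < r -> r < p%:Z -> p%:Z * z != r.
Proof.
move=> r0 rp; case: (lerP z 0) => hz.
  have : 0 <= p%:Z * (- z) by apply: mulr_ge0; lia.
  rewrite mulrN; lia.
have : 0 <= p%:Z * (z - 1) by apply: mulr_ge0; lia.
rewrite mulrBr mulr1; lia.
Qed.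

Lemma pickE_mid (p q : nat) (a b X : int) : (2 <= p)%N -> (2 <= q)%N ->
  (3 <= p)%N || (3 <= q)%N ->
  exists E, [/\ E <= X, forall k, a - E != p%:Z * k & forall k, E - b != q%:Z * k].
Proof.
move=> p2 q2 /orP[p3|q3].
  pose K : int := `|a - X| + 1.
  have hK : 2 * K <= p%:Z * K by apply: ler_wpM2r; lia.
  have E1p : forall k, a - (a - 1 - p%:Z * K) != p%:Z * k.
    move=> k; apply/eqP => h; move: (@nmul p (k - K) 1); rewrite mulrBr -h; lia.
  have E2p : forall k, a - (a - 2 - p%:Z * K) != p%:Z * k.
    move=> k; apply/eqP => h; move: (@nmul p (k - K) 2); rewrite mulrBr -h; lia.
  case: (classic (exists k, (a - 1 - p%:Z * K) - b = q%:Z * k)) => [[k1 hk1]|hn].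
    exists (a - 2 - p%:Z * K); split => //; first lia.
    move=> k2; apply/eqP => hk2; move: (@nmul q (k1 - k2) 1); rewrite mulrBr -hk1 -hk2; lia.
  exists (a - 1 - p%:Z * K); split => //; first lia.
  by move=> k; apply/eqP => h; apply: hn; exists k.
pose K : int := `|b - X| + 1.
have hK : 2 * K <= q%:Z * K by apply: ler_wpM2r; lia.
have E1q : forall k, (b + 1 - q%:Z * K) - b != q%:Z * k.
  move=> k; apply/eqP => h; move: (@nmul q (k + K) 1); rewrite mulrDr -h; lia.
have E2q : forall k, (b + 2 - q%:Z * K) - b != q%:Z * k.
  move=> k; apply/eqP => h; move: (@nmul q (k + K) 2); rewrite mulrDr -h; lia.
case: (classic (exists k, a - (b + 1 - q%:Z * K) = p%:Z * k)) => [[k1 hk1]|hn].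
  exists (b + 2 - q%:Z * K); split => //; first lia.
  move=> k2; apply/eqP => hk2; move: (@nmul p (k1 - k2) 1); rewrite mulrBr -hk1 -hk2; lia.
exists (b + 1 - q%:Z * K); split => //; first lia.
by move=> k; apply/eqP => h; apply: hn; exists k.
Qed.

Lemma pickE_end (p : nat) (a X : int) : (2 <= p)%N ->
  exists E, E <= X /\ forall k, a - E != p%:Z * k.
Proof.
move=> p2; pose K : int := `|a - X| + 1.
have hK : 2 * K <= p%:Z * K by apply: ler_wpM2r; lia.
exists (a - 1 - p%:Z * K); split; first lia.
move=> k; apply/eqP => h; move: (@nmul p (k - K) 1); rewrite mulrBr -h; lia.
Qed.

Lemma ia1 (d k m e0 ed : int) : 0 < d -> m < k -> e0 - ed = d * k -> ed + m * d + 1 <= e0.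
Proof.
move=> d0 mk h; have : 0 <= d * (k - m - 1) by apply: mulr_ge0; lia.
rewrite !mulrBr mulr1; lia.
Qed.

Lemma ia2 (d i k m e0 ed : int) : i < d -> m < k -> e0 - ed = d * k ->
  ed + m * d + 1 <= e0 - i * k + m * i.
Proof.
move=> d0 mk h; have : 0 <= (d - i) * (k - m - 1) by apply: mulr_ge0; lia.
rewrite !mulrBr !mulrBl !mulr1; lia.
Qed.

Lemma ia3 (i k m e0 : int) : 0 < i -> k < m -> e0 + 1 <= e0 - i * k + m * i.
Proof.
move=> d0 mk; have : 0 <= i * (m - k - 1) by apply: mulr_ge0; lia.
rewrite !mulrBr mulr1; lia.
Qed.

Lemma ia4 (d k m e0 ed : int) : 0 < d -> k < m -> e0 - ed = d * k -> e0 + 1 <= ed + m * d.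
Proof.
move=> d0 mk h; have : 0 <= d * (m - k - 1) by apply: mulr_ge0; lia.
rewrite !mulrBr mulr1; lia.
Qed.

Lemma cN (c : nat) (N : int) : (1 <= c)%N -> 0 <= N -> N <= c%:Z * N.
Proof.
move=> c1 N0; have : 0 <= (c%:Z - 1) * N by apply: mulr_ge0; lia.
rewrite mulrBl mul1r; lia.
Qed.





Section Main.
Variables (R : idomainType) (K : fieldType) (iota : {rmorphism R -> K}) (pi : R).
Hypothesis pi0 : pi != 0.
Hypothesis pinu : pi \isn't a GRing.unit.
Hypothesis decomp : forall x : R, x != 0 -> exists (u : R) (n : nat), u \is a GRing.unit /\ x = u * pi ^+ n.
Hypothesis iinj : injective iota.
Hypothesis frac : forall k : K, exists a b : R, b != 0 /\ k = iota a / iota b.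

Local Notation rho := (iota pi).

Lemma rho0 : rho != 0.
Proof. by rewrite raddf_eq0. Qed.

Definition V (e : int) (x : K) := exists r : R, x = iota r * rho ^ e.
Definition U (e : int) (x : K) := exists u : R, u \is a GRing.unit /\ x = iota u * rho ^ e.

Lemma UV e x : U e x -> V e x.
Proof. by case=> u [_ ->]; exists u. Qed.

Lemma V0 e : V e 0.
Proof. by exists 0; rewrite rmorph0 mul0r. Qed.

Lemma VD e x y : V e x -> V e y -> V e (x + y).
Proof. by case=> r -> [s ->]; exists (r + s); rewrite rmorphD mulrDl. Qed.

Lemma rhoX (n : nat) : rho ^ (n%:Z) = iota (pi ^+ n).
Proof. by rewrite rmorphXn. Qed.

Lemma Vle e f x : (e <= f)%R -> V f x -> V e x.
Proof.
move=> lef [r ->].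
have [n hn] : exists n : nat, f = e + n%:Z.
  by exists `|f - e|%N; rewrite gez0_abs ?subr_ge0 // addrCA subrr addr0.
exists (r * pi ^+ n); rewrite hn expfzDr ?rho0 // rhoX rmorphM mulrA.
by rewrite mulrAC.
Qed.

Lemma VM e f x y : V e x -> V f y -> V (e + f) (x * y).
Proof.
case=> r -> [s ->]; exists (r * s); rewrite expfzDr ?rho0 // rmorphM.
by rewrite -!mulrA; congr (_ * _); rewrite mulrCA.
Qed.

Lemma UM e f x y : U e x -> U f y -> U (e + f) (x * y).
Proof.
case=> r [ur ->] [s [us ->]]; exists (r * s); split; first by rewrite unitrM ur us.
rewrite expfzDr ?rho0 // rmorphM.
by rewrite -!mulrA; congr (_ * _); rewrite mulrCA.
Qed.

Lemma UX e x (n : nat) : U e x -> U (e * n%:Z) (x ^+ n).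
Proof.
case=> u [uu ->]; exists (u ^+ n); split; first by rewrite unitrX.
by rewrite exprMn rmorphXn -exprz_exp.
Qed.

Lemma U1 : U 0 1.
Proof. by exists 1; rewrite unitr1 rmorph1 expr0z mulr1. Qed.

Lemma Urho e : U e (rho ^ e).
Proof. by exists 1; rewrite unitr1 rmorph1 mul1r. Qed.

Lemma Uneq0 e x : U e x -> x != 0.
Proof.
case=> u [uu ->]; apply: mulf_neq0; last exact: expfz_neq0 rho0.
by rewrite raddf_eq0 //; apply: contraTneq uu => ->; rewrite unitr0.
Qed.

Lemma key e x y : U e x -> V (e + 1) y -> x + y != 0.
Proof.
case=> u [uu ->] [r ->].
rewrite expfzDr ?rho0 // expr1z.
have -> : iota u * rho ^ e + iota r * (rho ^ e * rho) = iota (u + r * pi) * rho ^ e.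
  by rewrite rmorphD rmorphM; ring.
rewrite mulf_neq0 ?expfz_neq0 ?rho0 // raddf_eq0 //.
apply/eqP=> h; move/negP: pinu; apply.
have : u = - (r * pi) by apply/eqP; rewrite -subr_eq0 opprK h.
by move=> hu; move: uu; rewrite hu unitrN unitrM => /andP[].
Qed.

Lemma rep x : x != 0 -> exists e, U e x.
Proof.
move=> x0; have [a [b [b0 hx]]] := frac x.
have a0 : a != 0 by apply: contraNneq x0 => a0; rewrite hx a0 rmorph0 mul0r.
have [ua [na [uua ha]]] := decomp a0.
have [ub [nb [uub hb]]] := decomp b0.
exists (na%:Z - nb%:Z); exists (ua / ub); split; first by rewrite unitrMr ?unitrV.
rewrite hx ha hb !rmorphM rmorphV // expfzDr ?rho0 //.
rewrite -exprnN -!rmorphXn.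
rewrite invfM -[rho ^ na]/(rho ^+ na) rmorphXn; ring.
Qed.


Lemma Vsum (I : eqType) (r : seq I) (P : pred I) (F : I -> K) e :
  (forall i, P i -> V e (F i)) -> V e (\sum_(i <- r | P i) F i).
Proof.
move=> h; apply: (big_ind (V e)); [exact: V0 | exact: VD | exact: h].
Qed.

Lemma sum_unique (n : nat) (c : 'I_n -> K) (e : 'I_n -> int) (x : K) (m : int)
    (j0 : 'I_n) :
  U m x -> U (e j0) (c j0) ->
  (forall j, j != j0 -> c j = 0 \/
     (U (e j) (c j) /\ e j0 + (j0 : nat)%:Z * m < e j + (j : nat)%:Z * m)) ->
  \sum_j c j * x ^+ j != 0.
Proof.
move=> Ux Uc hj; rewrite (bigD1 j0) //=.
apply: (@key (e j0 + (j0 : nat)%:Z * m)).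
  by rewrite [X in e j0 + X]mulrC; apply: UM => //; apply: UX.
apply: Vsum => j jj0; case: (hj j jj0) => [-> | [Ucj lt]]; first by rewrite mul0r; apply: V0.
apply: (@Vle _ (e j + (j : nat)%:Z * m)); first by rewrite lezD1.
by apply: UV; rewrite [X in e j + X]mulrC; apply: UM => //; apply: UX.
Qed.

Hypothesis fres : finite_residue pi.

Lemma dvdD' a b : dvdR pi a -> dvdR pi b -> dvdR pi (a + b).
Proof. by case=> x -> [y ->]; exists (x + y); rewrite mulrDr. Qed.

Lemma dvdN' a : dvdR pi a -> dvdR pi (- a).
Proof. by case=> x ->; exists (- x); rewrite mulrN. Qed.

Lemma dvdB' a b : dvdR pi a -> dvdR pi b -> dvdR pi (a - b).
Proof. by move=> ha hb; apply: dvdD' => //; apply: dvdN'. Qed.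

Lemma dvd_nonunit y : dvdR pi y -> y \isn't a GRing.unit.
Proof. by case=> c ->; rewrite unitrM negb_and pinu. Qed.

Lemma unit_cong y t : y \is a GRing.unit -> dvdR pi (y - t) -> t \is a GRing.unit.
Proof.
move=> uy hyt.
have ht : ~ dvdR pi t.
  move=> ht; have : dvdR pi ((y - t) + t) by apply: dvdD'.
  by rewrite subrK => /dvd_nonunit; rewrite uy.
have t0 : t != 0 by apply/eqP=> t0; apply: ht; exists 0; rewrite t0 mulr0.
have [u [[|k] [uu ht0]]] := decomp t0; first by rewrite ht0 expr0 mulr1.
by exfalso; apply: ht; exists (u * pi ^+ k); rewrite ht0 exprS; ring.
Qed.

Lemma avoid (phi : R -> R) :
  (forall y t, y \is a GRing.unit -> t \is a GRing.unit -> dvdR pi (y - t) ->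
     dvdR pi (phi y - phi t)) ->
  exists c, forall y, y \is a GRing.unit -> ~ dvdR pi (phi y - c).
Proof.
move=> hphi; case: fres => s hs.
suff : forall n (L : seq R), (size L <= n)%N ->
    (forall x, exists2 y, y \in L & dvdR pi (x - y)) ->
    exists c, forall y, y \is a GRing.unit -> ~ dvdR pi (phi y - c).
  by move/(_ (size s) s (leqnn _) hs).
elim=> [|n IH] L hL hcov.
  by case: (hcov 0) => y; case: L hL hcov.
pose L' := [seq phi t | t <- L & t \is a GRing.unit].
have hL' : (size L' <= n)%N.
  rewrite size_map size_filter -ltnS; apply: leq_trans hL.
  rewrite ltn_neqAle count_size andbT -all_count.
  case: (hcov 0) => t0 t0L h0; apply/allPn; exists t0 => //.
  by apply: dvd_nonunit; move: (dvdN' h0); rewrite sub0r opprK.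
case: (classic (forall x, exists2 y, y \in L' & dvdR pi (x - y))) => hc.
  exact: IH hL' hc.
have [c hc'] := not_all_ex_not _ _ hc.
exists c => y uy hy; apply: hc'.
case: (hcov y) => t tL hyt.
have ut := unit_cong uy hyt.
exists (phi t); first by apply: map_f; rewrite mem_filter ut.
have := dvdB' (hphi y t uy ut hyt) hy.
suff -> : phi y - phi t - (phi y - c) = c - phi t by [].
by ring.
Qed.


Variables (d : nat) (hd : (1 < d)%N).

Definition coefs (p : position K d) (j : 'I_d.+1) := odflt 0 (p j).
Definition legal_pos (p : position K d) := forall j a, p j = Some a -> legal j a.

Lemma horner_poly_of (p : position K d) x :
  (poly_of p).[x] = \sum_(j < d.+1) coefs p j * x ^+ j.
Proof.
rewrite /poly_of horner_sum; apply: eq_bigr => j _.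
by rewrite hornerZ hornerXn.
Qed.

Lemma sum_at0 (c : 'I_d.+1 -> K) : \sum_(j < d.+1) c j * 0 ^+ j = c ord0.
Proof.
rewrite big_ord_recl expr0 mulr1 big1 ?addr0 // => j _.
by rewrite expr0n /= mulr0.
Qed.

Lemma coefs_assign p i a j :
  coefs (assign p i a) j = if j == i then a else coefs p j.
Proof. by rewrite /coefs /assign; case: (j == i). Qed.

Lemma coef_rep (p : position K d) :
  exists e : 'I_d.+1 -> int, forall j, coefs p j = 0 \/ U (e j) (coefs p j).
Proof.
apply: (@fin_all_exists _ (fun _ => int) (fun j z => coefs p j = 0 \/ U z (coefs p j))) => j.
case: (eqVneq (coefs p j) 0) => h.
  by exists 0; left.
by have [z hz] := rep h; exists z; right.
Qed.

Lemma legal_end p j : legal_pos p -> p j != None ->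
  ((j : nat) = 0%N \/ (j : nat) = d) -> coefs p j != 0.
Proof.
move=> lp; rewrite /coefs; case hj: (p j) => [a|] // _ hj0.
exact: (lp j a hj hj0).
Qed.

Lemma sumS (e : 'I_d.+1 -> int) j : `|e j| <= \sum_(k < d.+1) `|e k|.
Proof.
rewrite (bigD1 j) //= lerDl; apply: sumr_ge0 => k _; exact: normr_ge0.
Qed.

Lemma cbound (c : nat) (y S : int) : (c <= d)%N -> `|y| <= S ->
  - (d%:Z * S) <= c%:Z * y /\ c%:Z * y <= d%:Z * S.
Proof.
move=> cd yS.
have h : `|c%:Z * y| <= d%:Z * S.
  rewrite normrM; apply: (@le_trans _ _ (c%:Z * S)).
    by apply: ler_wpM2l => //; lia.
  by apply: ler_wpM2r; lia.
by move: h; rewrite ler_norml => /andP[].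
Qed.

Lemma cE (c : nat) (E : int) : (1 <= c)%N -> E <= 0 -> c%:Z * E <= E.
Proof.
move=> c1 E0; have : (c%:Z - 1) * E <= 0 by apply: mulr_ge0_le0; lia.
rewrite mulrBl mul1r; lia.
Qed.


Lemma inord0 : (inord 0 : 'I_d.+1) = ord0.
Proof. by apply: val_inj; rewrite /= inordK. Qed.

Lemma inordd : (inord d : 'I_d.+1) = ord_max.
Proof. by apply: val_inj; rewrite /= inordK. Qed.

Lemma nora_T1 (p : position K d) (i : 'I_d.+1) :
  p i = None -> (forall j, j != i -> p j != None) -> legal_pos p ->
  [|| (i : nat) == 0%N, (i : nat) == d |
      [&& (2 <= i)%N, (2 <= d - i)%N & (3 <= i)%N || (3 <= d - i)%N]] ->
  exists a, legal i a /\ ~ (exists x, root (poly_of (assign p i a)) x).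
Proof.
move=> pin full lp hi.
have id : (i <= d)%N by rewrite -ltnS ltn_ord.
have [e he] := coef_rep p.
pose S : int := \sum_(k < d.+1) `|e k|.
have S0 : 0 <= S by apply: sumr_ge0 => k _; exact: normr_ge0.
have hS : forall j, `|e j| <= S := fun j => sumS e j.
pose X : int := - (2 * (d%:Z * S) + 1).
pose e0 := e ord0. pose ed := e ord_max.
have [E [EX H0 Hd H0d]] : exists E, [/\ E <= X,
    (0 < i)%N -> forall k, e0 - E != i%:Z * k,
    (i < d)%N -> forall k, E - ed != (d - i)%N%:Z * k &
    ((i : nat) == 0%N) || ((i : nat) == d) -> forall k,
       (if (i : nat) == 0%N then E else e0) - (if (i : nat) == d then E else ed)
         != d%:Z * k].
  case/or3P: hi => [/eqP i0|/eqP idd|/and3P[i2 di2 i3]].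
  - have [E [EX hE]] := pickE_end ed X hd.
    have hE' : forall k, E - ed != d%:Z * k.
      move=> k; apply/eqP => h; move/eqP: (hE (- k)); apply.
      by rewrite mulrN -h opprB.
    exists E; split => //; first by rewrite i0.
      by move=> _ k; rewrite i0 subn0.
    have -> : ((i : nat) == d) = false by rewrite i0; apply/eqP; lia.
    by move=> _ k; rewrite i0 eqxx.
  - have [E [EX hE]] := pickE_end e0 X hd.
    exists E; split => //; first by move=> _ k; rewrite idd.
      by rewrite idd ltnn.
    have -> : ((i : nat) == 0%N) = false by rewrite idd; apply/eqP; lia.
    by move=> _ k; rewrite idd eqxx.
  - have [E [EX hE1 hE2]] := pickE_mid e0 ed X i2 di2 i3.
    exists E; split => //.
    by case/orP => /eqP h; exfalso; move: i2 di2; rewrite h; lia.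
pose a : K := rho ^ E.
have Ua : U E a by apply: Urho.
exists a; split; first by move=> _; apply: Uneq0 Ua.
case=> x /eqP; rewrite horner_poly_of => hx.
pose c := coefs (assign p i a).
have nd0 : forall k : 'I_d.+1, ((k : nat) = 0%N \/ (k : nat) = d) -> c k != 0.
  move=> k hk; rewrite /c coefs_assign; case: (k =P i) => [_|/eqP ne].
    exact: (Uneq0 Ua).
  by apply: legal_end => //; apply: full.
case: (eqVneq x 0) => [x0 | xn0].
  by move: hx; rewrite x0 sum_at0 => /eqP; apply/negP; apply: nd0; left.
have [m Um] := rep xn0.
pose en (k : nat) := if k == (i : nat) then E else e (inord k).
pose pres (k : nat) := (k == (i : nat)) || (c (inord k) != 0).
have en0 : en 0%N = if (i : nat) == 0%N then E else e0.
  by rewrite /en eq_sym inord0.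
have end' : en d = if (i : nat) == d then E else ed.
  by rewrite /en eq_sym inordd.
have enj : forall j : nat, (j <= d)%N -> j != (i : nat) -> `|en j| <= S.
  by move=> j _ /negbTE hj; rewrite /en hj.
have eni : en i = E by rewrite /en eqxx.
have dS : 0 <= d%:Z * S by apply: mulr_ge0; lia.
have XS : X <= 0 by rewrite /X; lia.
have p0 : pres 0%N by rewrite /pres inord0; apply/orP; right; apply: nd0; left.
have pd : pres d by rewrite /pres inordd; apply/orP; right; apply: nd0; right.
have ppi : pres i by rewrite /pres eqxx.
have hH0 : (0 < i)%N -> en 0%N - en i != i%:Z * m.
  by move=> i0; rewrite eni en0 ifN ?H0 // -lt0n.
have hHd : (i < d)%N -> en i - en d != (d - i)%N%:Z * m.
  by move=> i0; rewrite eni end' ifN ?Hd // neq_ltn i0.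
have hH0d : ((i : nat) == 0%N) || ((i : nat) == d) -> en 0%N - en d != d%:Z * m.
  by move=> h; rewrite en0 end'; apply: H0d.
have hHmid : (0 < i < d)%N -> d%:Z * en i < (d - i)%N%:Z * en 0%N + i%:Z * en d.
  move=> /andP[i0 i1]; rewrite eni en0 end' !ifN ?neq_ltn ?i1 // -?lt0n //.
  have [a1 a2] := cbound (leq_subr i d) (hS ord0).
  have [b1 b2] := cbound id (hS ord_max).
  have := cE (ltnW hd) (le_trans EX XS); lia.
have hHl : forall j, (0 < j < i)%N -> pres j ->
     (i - j)%N%:Z * en 0%N + (j - 0)%N%:Z * en i < (i - 0)%N%:Z * en j.
  move=> j /andP[j0 ji] _; rewrite eni en0 ifN; last by rewrite -lt0n (ltn_trans j0 ji).
  have [a1 a2] := cbound (leq_trans (leq_subr j i) id) (hS ord0).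
  have [b1 b2] := cbound (leq_trans (leq_subr 0 i) id)
     (enj j (ltnW (leq_trans ji id)) (negbT (ltn_eqF ji))).
  have := cE (c := (j - 0)%N) (ltac:(lia)) (le_trans EX XS); lia.
have hHr : forall j, (i < j < d)%N -> pres j ->
     (d - j)%N%:Z * en i + (j - i)%N%:Z * en d < (d - i)%N%:Z * en j.
  move=> j /andP[ij jd] _; rewrite eni end' ifN; last by rewrite neq_ltn (ltn_trans ij jd).
  have [a1 a2] := cbound (leq_trans (leq_subr i j) (ltnW jd)) (hS ord_max).
  have [b1 b2] := cbound (leq_subr i d)
     (enj j (ltnW jd) (negbT (gtn_eqF ij))).
  have := cE (c := (d - j)%N) (ltac:(lia)) (le_trans EX XS); lia.
have [j0 [j0d pj0 hj0]] := anchor hd id p0 pd ppi hH0 hHd hH0d hHmid hHl hHr.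
pose j0o : 'I_d.+1 := inord j0.
have vj0 : (j0o : nat) = j0 by rewrite /j0o inordK // ltnS.
have cj : forall j : 'I_d.+1, j != i -> c j = coefs p j.
  by move=> j /negbTE ji; rewrite /c coefs_assign ji.
have enj' : forall j : 'I_d.+1, j != i -> en j = e j.
  by move=> j ji; rewrite /en ifN ?inord_val.
have ci : c i = a by rewrite /c coefs_assign eqxx.
have hU0 : U (en j0o) (c j0o).
  rewrite vj0; case: (eqVneq j0 (i : nat)) => [e0i|ne].
    have -> : j0o = i by apply: val_inj => /=; rewrite vj0.
    by rewrite ci /en e0i eqxx.
  have ne' : j0o != i by apply: contra ne => /eqP <-; rewrite vj0.
  move: pj0; rewrite /pres (negbTE ne) /= -/j0o => cn0.
  have -> : en j0 = e j0o by rewrite -vj0 enj'.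
  by case: (he j0o) => h; [move: cn0; rewrite cj // h eqxx | rewrite cj].
have hrest : forall j : 'I_d.+1, j != j0o -> c j = 0 \/
    (U (en j) (c j) /\ en j0o + (j0o : nat)%:Z * m < en j + (j : nat)%:Z * m).
  move=> j jne.
  have jn : (j : nat) != j0 by rewrite -vj0.
  have jd : (j <= d)%N by rewrite -ltnS ltn_ord.
  case: (eqVneq j i) => [ji|ne].
    right; rewrite ji ci; split; first by rewrite eni.
    by rewrite vj0; apply: hj0 => //; rewrite -ji.
  rewrite cj //; case: (he j) => [h|h]; first by left.
  right; rewrite enj' //; split => //.
  have := hj0 j jd jn; rewrite vj0 enj' //; apply.
  by rewrite /pres inord_val cj // (Uneq0 h) orbT.
by move: (sum_unique Um hU0 hrest); rewrite hx eqxx.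
Qed.


Lemma sum_unique2 (n : nat) (c : 'I_n -> K) (x : K) (m f : int) (j0 : 'I_n) :
  U m x -> U f (c j0) ->
  (forall j, j != j0 -> V (f + (j0 : nat)%:Z * m + 1) (c j * x ^+ j)) ->
  \sum_j c j * x ^+ j != 0.
Proof.
move=> Ux Uc hj; rewrite (bigD1 j0) //=.
apply: (@key (f + (j0 : nat)%:Z * m)); last by apply: Vsum.
by rewrite [X in f + X]mulrC; apply: UM => //; apply: UX.
Qed.

Lemma VterM f m (cc x : K) (j : nat) : V f cc -> U m x -> V (f + j%:Z * m) (cc * x ^+ j).
Proof. by move=> hc hx; rewrite [X in f + X]mulrC; apply: VM => //; apply: UV; apply: UX. Qed.

Definition cg (a b : R) := dvdR pi (a - b).

Lemma cgD a b a' b' : cg a b -> cg a' b' -> cg (a + a') (b + b').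
Proof.
move=> h h'; have := dvdD' h h'; rewrite /cg.
by have -> : a + a' - (b + b') = a - b + (a' - b') by ring.
Qed.

Lemma cgN a b : cg a b -> cg (- a) (- b).
Proof. by move=> /dvdN'; rewrite /cg opprB addrC opprK. Qed.

Lemma cgM a b a' b' : cg a b -> cg a' b' -> cg (a * a') (b * b').
Proof.
move=> [q hq] [q' hq']; exists (a * q' + q * b').
have -> : a * a' - b * b' = a * (a' - b') + (a - b) * b' by ring.
by rewrite hq hq'; ring.
Qed.

Lemma cgR a : cg a a.
Proof. by exists 0; rewrite subrr mulr0. Qed.

Lemma cgX a b n : cg a b -> cg (a ^+ n) (b ^+ n).
Proof.
move=> h; elim: n => [|n IH]; first by rewrite !expr0; apply: cgR.
by rewrite !exprS; apply: cgM.
Qed.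

Lemma cgV a b : a \is a GRing.unit -> b \is a GRing.unit -> cg a b -> cg (a^-1) (b^-1).
Proof.
move=> ua ub [q hq]; exists (- (a^-1 * q * b^-1)).
have -> : a^-1 - b^-1 = a^-1 * (b - a) * b^-1.
  by rewrite mulrBr mulrBl mulrK // mulVr // mul1r.
have -> : b - a = - (a - b) by rewrite opprB.
by rewrite hq; ring.
Qed.


Lemma Uform u m (n : nat) : (iota u * rho ^ m) ^+ n = iota (u ^+ n) * rho ^ (m * n%:Z).
Proof. by rewrite exprMn rmorphXn -exprz_exp. Qed.

Lemma sum3 (p : position K d) (i : 'I_d.+1) a x :
  (0 < i < d)%N ->
  (forall j : 'I_d.+1, j != i -> (0 < j < d)%N -> coefs p j = 0) ->
  \sum_(j < d.+1) coefs (assign p i a) j * x ^+ j =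
    coefs p ord0 + a * x ^+ i + coefs p ord_max * x ^+ d.
Proof.
move=> /andP[i0 id] hz.
have i0' : (ord0 : 'I_d.+1) != i by apply/eqP => h; move: i0; rewrite -h.
have id' : (ord_max : 'I_d.+1) != i by apply/eqP => h; move: id; rewrite -h /= ltnn.
have m0 : (ord_max : 'I_d.+1) != ord0 by apply/eqP => h; move: hd; rewrite -[d]/(nat_of_ord (@ord_max d)) h.
rewrite (bigD1 ord0) //= (bigD1 ord_max) //= (bigD1 i) /=; last by rewrite eq_sym i0' eq_sym id'.
rewrite big1 ?addr0.
  rewrite !coefs_assign eqxx (negbTE i0') (negbTE id') expr0 mulr1.
  by rewrite [_ * x ^+ d + _]addrC addrA.
move=> j /andP[/andP[j0 jd] ji]; rewrite coefs_assign (negbTE ji) hz ?mul0r //.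
rewrite lt0n; apply/andP; split.
  by apply: contra j0 => /eqP h; apply/eqP; apply: val_inj.
rewrite ltn_neqAle -ltnS ltn_ord andbT.
by apply: contra jd => /eqP h; apply/eqP; apply: val_inj.
Qed.


Lemma nora_T2 (p : position K d) (i : 'I_d.+1) :
  p i = None -> (forall j, j != i -> p j != None) -> legal_pos p -> (0 < i < d)%N ->
  (forall j : 'I_d.+1, j != i -> (0 < j < d)%N -> coefs p j = 0) ->
  exists a, legal i a /\ ~ (exists x, root (poly_of (assign p i a)) x).
Proof.
move=> pin full lp hi hz.
have /andP[i0 id] := hi.
have i0' : (ord0 : 'I_d.+1) != i by apply/eqP => h; move: i0; rewrite -h.
have id' : (ord_max : 'I_d.+1) != i by apply/eqP => h; move: id; rewrite -h /= ltnn.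
have c0n : coefs p ord0 != 0 by apply: legal_end => //; [apply: full | left].
have cdn : coefs p ord_max != 0 by apply: legal_end => //; [apply: full | right].
have [e0 U0] := rep c0n.
have [ed Ud] := rep cdn.
have legi : forall a : K, legal i a.
  by move=> a; rewrite /legal => -[h|h]; exfalso; move: i0 id; rewrite h; lia.
have at0 : forall a, \sum_(j < d.+1) coefs (assign p i a) j * 0 ^+ j != 0.
  by move=> a; rewrite sum3 // !expr0n /= (gtn_eqF i0) (gtn_eqF (ltnW hd)) !mulr0 !addr0.
case: (classic (exists k, e0 - ed = d%:Z * k)) => [[k hk]|hnk].
  pose va := e0 - i%:Z * k.
  have [w0 [uw0 hw0]] := U0.
  have [wd [uwd hwd]] := Ud.
  pose phi := fun y : R => - (wd * y ^+ d + w0) * (y^-1) ^+ i.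
  have [c' hc'] : exists c', forall y, y \is a GRing.unit -> ~ dvdR pi (phi y - c').
    apply: avoid => y t uy ut h.
    apply: (cgM (cgN (cgD (cgM (cgR wd) (cgX d h)) (cgR w0)))).
    by apply: cgX; apply: cgV.
  pose a := iota c' * rho ^ va.
  have Va : V va a by exists c'.
  exists a; split => //.
  case=> x /eqP; rewrite horner_poly_of => hx.
  case: (eqVneq x 0) => [x0|xn0]; first by move: hx (at0 a); rewrite x0 => ->; rewrite eqxx.
  have [m Um] := rep xn0.
  move: hx; rewrite sum3 // => /eqP; apply/negP.
  have Ucd := UM Ud (UX d Um).
  have Vax := VM Va (UV (UX i Um)).
  have d0 : (0 : int) < d%:Z by lia.
  have i0z : (0 : int) < i%:Z by lia.
  have idz : i%:Z < d%:Z :> int by lia.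
  case: (ltrgtP m k) => hm.
  - rewrite addrC; apply: key Ucd _; apply: VD.
      exact: (Vle (ia1 d0 hm hk) (UV U0)).
    exact: (Vle (ia2 idz hm hk) Vax).
  - rewrite -addrA; apply: key U0 _; apply: VD.
      exact: (Vle (ia3 e0 i0z hm) Vax).
    exact: (Vle (ia4 d0 hm hk) (UV Ucd)).
  have [u [uu hxu]] := Um.
  rewrite hxu hw0 hwd /a !Uform hm.
  have E1 : rho ^ va * rho ^ (k * i%:Z) = rho ^ e0.
    by rewrite -expfzDr ?rho0 //; congr (_ ^ _); rewrite /va; ring.
  have E2 : rho ^ ed * rho ^ (k * d%:Z) = rho ^ e0.
    by rewrite -expfzDr ?rho0 //; congr (_ ^ _); rewrite mulrC -hk; ring.
  have -> : iota w0 * rho ^ e0 + iota c' * rho ^ va * (iota (u ^+ i) * rho ^ (k * i%:Z)) +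
      iota wd * rho ^ ed * (iota (u ^+ d) * rho ^ (k * d%:Z)) =
      iota (w0 + c' * u ^+ i + wd * u ^+ d) * rho ^ e0.
    have t2 : iota c' * rho ^ va * (iota (u ^+ i) * rho ^ (k * i%:Z)) =
        iota (c' * u ^+ i) * rho ^ e0 by rewrite -E1 rmorphM; ring.
    have t3 : iota wd * rho ^ ed * (iota (u ^+ d) * rho ^ (k * d%:Z)) =
        iota (wd * u ^+ d) * rho ^ e0 by rewrite -E2 rmorphM; ring.
    by rewrite t2 t3 -!mulrDl -!rmorphD.
  rewrite mulf_neq0 ?expfz_neq0 ?rho0 // raddf_eq0 //.
  apply/eqP => h0; apply: (hc' u uu); exists 0; rewrite mulr0.
  have h1 : - (wd * u ^+ d + w0) = c' * u ^+ i.
    have := congr1 (fun z => c' * u ^+ i - z) h0; rewrite subr0 => <-; ring.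
  by rewrite /phi h1 -mulrA -exprMn mulrV // expr1n mulr1 subrr.
exists 0; split => //.
case=> x /eqP; rewrite horner_poly_of => hx.
case: (eqVneq x 0) => [x0|xn0]; first by move: hx (at0 0); rewrite x0 => ->; rewrite eqxx.
have [m Um] := rep xn0.
move: hx; rewrite sum3 // mul0r addr0 => /eqP; apply/negP.
have Ucd := UM Ud (UX d Um).
have hne : e0 != ed + m * d%:Z.
  by apply/eqP => h; apply: hnk; exists m; rewrite h mulrC; ring.
case: (ltrP e0 (ed + m * d%:Z)) => hlt.
  apply: key U0 _; apply: (Vle _ (UV Ucd)); lia.
rewrite addrC; apply: key Ucd _; apply: (Vle _ (UV U0)); lia.
Qed.


Lemma sum_split (p : position K d) (i : 'I_d.+1) a x :
  \sum_(j < d.+1) coefs (assign p i a) j * x ^+ j =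
    a * x ^+ i + \sum_(j < d.+1 | j != i) coefs p j * x ^+ j.
Proof.
rewrite (bigD1 i) //= coefs_assign eqxx; congr (_ + _).
by apply: eq_bigr => j /negbTE ji; rewrite coefs_assign ji.
Qed.

Lemma wanda_final (p : position K d) (i : 'I_d.+1) :
  p i = None -> (forall j, j != i -> p j != None) -> legal_pos p ->
  exists a, legal i a /\ exists x, root (poly_of (assign p i a)) x.
Proof.
move=> pin full lp.
have [e he] := coef_rep p.
pose S : int := \sum_(k < d.+1) `|e k|.
have S0 : 0 <= S by apply: sumr_ge0 => k _; exact: normr_ge0.
have hS : forall j, `|e j| <= S := fun j => sumS e j.
pose N : int := 2 * S + 1.
have N0 : 0 <= N by rewrite /N; lia.
pose g x := \sum_(j < d.+1 | j != i) coefs p j * x ^+ j.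
have hroot : forall a x, a * x ^+ i + g x = 0 -> root (poly_of (assign p i a)) x.
  by move=> a x h; rewrite /root horner_poly_of sum_split h.
have m0 : (ord_max : 'I_d.+1) != ord0.
  by apply/eqP => h; move: hd; rewrite -[d]/(nat_of_ord (@ord_max d)) h.
case: (ltnP 0 i) => i0.
  case: (ltnP i d) => id.
    exists (- g 1); split.
      by rewrite /legal => -[h|h]; exfalso; move: i0 id; rewrite h; lia.
    by exists 1; apply: hroot; rewrite expr1n mulr1 addrC subrr.
  have iE : i = ord_max by apply: val_inj => /=; move: id (ltn_ord i); lia.
  pose x := rho ^ N.
  have Ux : U N x by apply: Urho.
  have xn0 : x != 0 := Uneq0 Ux.
  have c0n : coefs p ord0 != 0.
    by apply: legal_end => //; [apply: full; rewrite iE eq_sym | left].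
  have U0 : U (e ord0) (coefs p ord0).
    by case: (he ord0) => // h; move: c0n; rewrite h eqxx.
  have gx : g x != 0.
    pose c' := fun j : 'I_d.+1 => if j == i then 0 else coefs p j.
    have -> : g x = \sum_(j < d.+1) c' j * x ^+ j.
      rewrite (bigD1 i) //= /c' eqxx mul0r add0r.
      by apply: eq_bigr => j /negbTE ->.
    apply: (sum_unique2 (f := e ord0) (j0 := ord0) Ux).
      by rewrite /c' iE eq_sym (negbTE m0).
    have Z0 : forall (j : 'I_d.+1) f, V f (0 * x ^+ j) by move=> j f; rewrite (mul0r (x ^+ j)); apply: V0.
    move=> j j0; rewrite /c'; case: ifP => _; first by apply: Z0.
    case: (he j) => [->|Uj]; first by apply: Z0.
    have := VterM j (UV Uj) Ux; apply: Vle.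
    have j1 : (1 <= j)%N by rewrite lt0n; apply: contra j0 => /eqP h; apply/eqP; apply: val_inj.
    have := cN j1 N0; have := hS j; have := hS ord0; rewrite /N /= mul0r addr0.
    move=> h1 h2 h3; clear -h1 h2 h3; lia.
  exists (- g x / x ^+ i); split.
    move=> _; rewrite mulf_neq0 ?oppr_eq0 ?invr_eq0 ?expf_neq0 //.
  by exists x; apply: hroot; rewrite mulrAC -mulrA divff ?expf_neq0 // mulr1 addrC subrr.
have iE : i = ord0 by apply: val_inj => /=; move: i0; rewrite leqn0 => /eqP.
pose x := rho ^ (- N).
have Ux : U (- N) x by apply: Urho.
have cdn : coefs p ord_max != 0.
  by apply: legal_end => //; [apply: full; rewrite iE | right].
have Ud : U (e ord_max) (coefs p ord_max).
  by case: (he ord_max) => // h; move: cdn; rewrite h eqxx.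
have gx : g x != 0.
  pose c' := fun j : 'I_d.+1 => if j == i then 0 else coefs p j.
  have -> : g x = \sum_(j < d.+1) c' j * x ^+ j.
    rewrite (bigD1 i) //= /c' eqxx mul0r add0r.
    by apply: eq_bigr => j /negbTE ->.
  apply: (sum_unique2 (f := e ord_max) (j0 := ord_max) Ux).
    by rewrite /c' iE (negbTE m0).
  have Z0 : forall (j : 'I_d.+1) f, V f (0 * x ^+ j) by move=> j f; rewrite (mul0r (x ^+ j)); apply: V0.
  move=> j jm; rewrite /c'; case: ifP => _; first by apply: Z0.
  case: (he j) => [->|Uj]; first by apply: Z0.
  have := VterM j (UV Uj) Ux; apply: Vle.
  have jd : (j < d)%N.
    rewrite ltn_neqAle -ltnS ltn_ord andbT; apply: contra jm => /eqP h; apply/eqP; apply: val_inj => /=.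
    by rewrite h.
  have h3 := cN (c := (d - j)%N) (ltac:(by rewrite subn_gt0)) N0.
  rewrite -subzn ?(ltnW jd) // mulrBl in h3.
  have h1 := hS j; have h2 := hS ord_max; move: h3 h1 h2.
  rewrite /N /=; move: (e j) (e ord_max) => ej ed h3 h1 h2.
  clear -h1 h2 h3; lia.
exists (- g x); split; first by move=> _; rewrite oppr_eq0.
by exists x; apply: hroot; rewrite iE expr0 mulr1 addrC subrr.
Qed.


Lemma nchosen_assign (p : position K d) i a : p i = None ->
  nchosen (assign p i a) = (nchosen p).+1.
Proof.
move=> pin; rewrite /nchosen.
rewrite (cardD1 i) [in RHS](cardD1 i) !inE /assign eqxx pin /= add1n; congr _.+1.
rewrite add0n; apply: eq_card => j; rewrite !inE.
by case: (eqVneq j i) => //= /negbTE ->.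
Qed.

Lemma legal_pos_assign (p : position K d) i a : legal_pos p -> legal i a ->
  legal_pos (assign p i a).
Proof.
move=> lp la j b; rewrite /assign; case: eqP => [-> [<-]|_] //; exact: lp.
Qed.

Lemma mover_eq first k :
  player_eqb (mover_at first k) (last_mover d first) = (odd k == odd d).
Proof.
by rewrite /last_mover /mover_at; case: (odd k); case: (odd d); case: first.
Qed.

Lemma force_gen first (Inv : nat -> position K d -> Prop) :
  (forall p, Inv 0%N p -> nchosen p = d -> exists i a,
      [/\ p i = None, legal i a & wins_final (last_mover d first) (assign p i a)]) ->
  (forall n p, Inv n.+1 p -> (n.+2 + nchosen p = d.+1)%N -> odd (nchosen p) == odd d ->
      exists i a, [/\ p i = None, legal i a & Inv n (assign p i a)]) ->
  (forall n p i a, Inv n.+1 p -> (n.+2 + nchosen p = d.+1)%N -> odd (nchosen p) != odd d ->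
      p i = None -> legal i a -> Inv n (assign p i a)) ->
  forall n p, Inv n p -> (n.+1 + nchosen p = d.+1)%N ->
     can_force first (last_mover d first) n.+1 p.
Proof.
move=> h1 h2 h3; elim=> [|n IH] p ip hn.
  have nd : nchosen p = d by move: hn; rewrite add1n => -[].
  rewrite /= mover_eq nd eqxx; exact: h1.
rewrite /= mover_eq; case: ifP => hm.
  have [i [a [pin la ia]]] := h2 n p ip hn hm.
  exists i, a; split => //; apply: IH => //.
  by rewrite nchosen_assign // -addSnnS.
move=> i a pin la; apply: IH; first by apply: h3 => //; rewrite hm.
by rewrite nchosen_assign // -addSnnS.
Qed.


Lemma nchosen_free (p : position K d) :
  (nchosen p + #|[pred j | p j == None]| = d.+1)%N.
Proof.
rewrite /nchosen; apply: (eq_trans _ (card_ord d.+1)).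
rewrite -(cardC [pred j | isSome (p j)]).
congr (_ + _); by apply: eq_card => j; rewrite !inE; case: (p j).
Qed.

Lemma free_exists (p : position K d) : (nchosen p < d.+1)%N -> exists i, p i = None.
Proof.
move=> h; have := nchosen_free p; case: (pickP [pred j | p j == None]) => [i /eqP hi|h0].
  by exists i.
by rewrite (eq_card0 h0) addn0 => e; move: h; rewrite e ltnn.
Qed.

Lemma free_unique (p : position K d) : nchosen p = d ->
  exists i, p i = None /\ forall j, j != i -> p j != None.
Proof.
move=> h; have [i hi] : exists i, p i = None by apply: free_exists; rewrite h.
exists i; split => // j ji; apply/negP => /eqP hj.
have := nchosen_free p; rewrite h (cardD1 i) (cardD1 j) !inE hi hj ji eqxx /=.
by move: (#|_|) => k; lia.
Qed.


Lemma nchosen0 : nchosen (fun _ : 'I_d.+1 => None : option K) = 0%N.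
Proof. by apply: eq_card0 => j. Qed.

Lemma legal1 (i : 'I_d.+1) : legal i (1 : K).
Proof. by move=> _; exact: oner_neq0. Qed.

Lemma wanda_wins first : last_mover d first = Wanda ->
  has_winning_strategy K d first (last_mover d first).
Proof.
move=> hw; rewrite /has_winning_strategy.
apply: (@force_gen first (fun _ p => legal_pos p)).
- move=> p lp nd; have [i [pin full]] := free_unique nd.
  have [a [la hx]] := wanda_final pin full lp.
  by exists i, a; split => //; rewrite hw.
- move=> n p lp hn _.
  have [i hi] : exists i, p i = None by apply: free_exists; rewrite -hn addSn ltnS leq_addl.
  by exists i, 1; split => //; [apply: legal1 | apply: legal_pos_assign => //; apply: legal1].
- by move=> n p i a lp _ _ _ la; apply: legal_pos_assign.
- by move=> j a.
by rewrite nchosen0 addn0.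
Qed.


Definition inB (j : 'I_d.+1) : bool :=
  (0 < j < d)%N && [|| (j : nat) == 1%N, (j : nat) == d.-1 | (d <= 4)%N].
Definition bcount (p : position K d) := #|[pred j | (p j == None) && inB j]|.
Definition Gz (p : position K d) :=
  forall j : 'I_d.+1, (0 < j < d)%N -> p j = None \/ p j = Some 0.
Definition NInv (n : nat) (p : position K d) :=
  legal_pos p /\ ((2 * bcount p < n.+1)%N \/ (Gz p /\ (2 * bcount p <= n.+2)%N /\ (d <= 4)%N)).

Lemma bcount_assign (p : position K d) i a : p i = None ->
  (bcount (assign p i a) + inB i = bcount p)%N.
Proof.
move=> pin; rewrite /bcount [in RHS](cardD1 i) !inE pin eqxx /= addnC; congr (_ + _).
apply: eq_card => j; rewrite !inE /assign.
by case: (eqVneq j i) => //= ->.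
Qed.

Lemma inB_mid (j : 'I_d.+1) : inB j -> (0 < j < d)%N.
Proof. by case/andP. Qed.

Lemma bcount_pos (p : position K d) i : p i = None -> inB i -> (0 < bcount p)%N.
Proof. by move=> pin ib; apply/card_gt0P; exists i; rewrite !inE pin eqxx ib. Qed.


Lemma nora_final (p : position K d) : NInv 0 p -> nchosen p = d ->
  exists i a, [/\ p i = None, legal i a & ~ (exists x, root (poly_of (assign p i a)) x)].
Proof.
move=> [lp hI] nd; have [i [pin full]] := free_unique nd.
have id : (i <= d)%N by rewrite -ltnS ltn_ord.
suff [a [la hx]] : exists a, legal i a /\ ~ (exists x, root (poly_of (assign p i a)) x).
  by exists i, a.
case: (boolP (((i : nat) == 0%N) || ((i : nat) == d))) => hend.
  by apply: nora_T1 => //; rewrite orbA hend.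
have hmid : (0 < i < d)%N.
  move: hend; rewrite negb_or lt0n => /andP[-> hd']; rewrite ltn_neqAle hd' id.
  done.
case: hI => [hb|[G _]].
  have nb : ~~ inB i.
    apply/negP => ib; have := bcount_pos pin ib; move: hb; rewrite ltnS leqn0 muln_eq0 /=.
    by move=> /eqP ->.
  move: nb; rewrite /inB hmid /= !negb_or => /and3P[i1 id1 d4].
  apply: nora_T1 => //; apply/or3P; apply: Or33.
  by move: hmid i1 id1 d4 => /andP[h1 h2] /eqP h3 /eqP h4 h5; apply/and3P; split; lia.
apply: nora_T2 => // j ji jm.
case: (G j jm) => hj; first by move: (full j ji); rewrite hj.
by rewrite /coefs hj.
Qed.


Lemma bcount_le (p : position K d) : (bcount p + 2 <= d.+1)%N.
Proof.
have m0 : (ord_max : 'I_d.+1) != ord0.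
  by apply/eqP => h; move: hd; rewrite -[d]/(nat_of_ord (@ord_max d)) h.
have := cardC [pred j | (p j == None) && inB j]; rewrite card_ord => <-.
rewrite /bcount leq_add2l (cardD1 ord0) (cardD1 ord_max) !inE m0 /= /inB /=.
by rewrite ltnn !andbF.
Qed.

Lemma bcount_le2 (p : position K d) : (5 <= d)%N -> (bcount p <= 2)%N.
Proof.
move=> d5; apply: (@leq_trans #|pred2 (inord 1 : 'I_d.+1) (inord d.-1)|); last first.
  by rewrite card2; case: (_ != _).
apply: subset_leq_card; apply/subsetP => j; rewrite !inE /inB => /andP[_ /andP[_ ]].
rewrite leqNgt d5 orbF.
case/orP => /eqP h; apply/orP; [left|right]; apply/eqP; apply: val_inj => /=;
  rewrite h inordK //; lia.
Qed.


Lemma nora_wins first : last_mover d first = Nora ->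
  has_winning_strategy K d first (last_mover d first).
Proof.
move=> hN; rewrite /has_winning_strategy.
pose av (j : 'I_d.+1) : K := if (0 < j < d)%N then 0 else 1.
have lav : forall j, legal j (av j).
  move=> j; rewrite /av /legal; case: ifP => h; last by move=> _; exact: oner_neq0.
  by move=> [e|e]; exfalso; move: h; rewrite e ?ltnn ?andbF.
have Gpres : forall (p : position K d) j, Gz p -> Gz (assign p j (av j)).
  move=> p j G k km; rewrite /assign; case: eqP => [e|_]; last exact: G.
  by right; move: km; rewrite e /av => ->.
apply: (@force_gen first NInv).
- move=> p ip nd; have [i [a [pin la hx]]] := nora_final ip nd.
  by exists i, a; split => //; rewrite hN.
- move=> n p [lp hI] hn _.
  case: (pickP [pred j | (p j == None) && inB j]) => [i /andP[/eqP pin ib] | hnone].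
    exists i, (av i); split => //; split; first by apply: legal_pos_assign.
    have hb := bcount_assign (av i) pin; rewrite ib in hb.
    case: hI => [h|[G [h d4]]]; first by left; lia.
    by right; split; [apply: Gpres | split => //; lia].
  have b0 : bcount p = 0%N by rewrite /bcount; apply: eq_card0.
  have [i pin] : exists i, p i = None by apply: free_exists; rewrite -hn addSn ltnS leq_addl.
  exists i, (av i); split => //; split; first by apply: legal_pos_assign.
  have hb := bcount_assign (av i) pin; rewrite b0 in hb.
  by left; move: hb; case: (inB i); lia.
- move=> n p i a [lp hI] hn hodd pin la; split; first by apply: legal_pos_assign.
  have ev : ~~ odd n.
    have := congr1 odd hn; rewrite oddD /= !negbK.
    by move: hodd; case: (odd n); case: (odd (nchosen p)); case: (odd d).
  have hk : n = (2 * n./2)%N by rewrite mul2n -{1}(odd_double_half n) (negbTE ev).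
  have hb := bcount_assign a pin.
  case: (boolP (inB i)) => ib; rewrite ?ib in hb.
    by case: hI => [h|[G [h d4]]]; left; lia.
  case: hI => [h|[G [h d4]]]; first by left; lia.
  right; split; last by split => //; lia.
  move=> k km; rewrite /assign; case: eqP => [ki|_]; last exact: G.
  by move: ib; rewrite /inB -ki km d4 !orbT.
- split; first by move=> j b.
  case: (leqP d 4) => d4.
    right; split; first by move=> j _; left.
    by split => //; have := bcount_le (fun _ => None); lia.
  by left; have := bcount_le2 (fun _ => None) d4; lia.
by rewrite nchosen0 addn0.
Qed.

End Main.

Unset Implicit Arguments.

Theorem theorem3 (R : idomainType) (K : fieldType) (iota : {rmorphism R -> K}) :
  complete_dvr_finite_residue R ->
  is_fraction_field iota ->
  forall (d : nat), (1 < d)%N ->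
  forall first : player, has_winning_strategy K d first (last_mover d first).
Proof.
move=> [pi [[pi0 pinu decomp] _ fres]] [iinj frac] d hd first.
have [h|h] : last_mover d first = Nora \/ last_mover d first = Wanda.
  by case: (last_mover d first); auto.
  exact: (nora_wins pi0 pinu decomp iinj frac fres hd h).
exact: (wanda_wins pi0 pinu decomp iinj frac hd h).
Qed.
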